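(* Let $\varphi:[0,\infty)\to\mathbb{R}$ be a continuous function which is Lebesgue integrable on $(0,\infty)$, of bounded variation on $[0,\infty)$, and satisfies $\varphi(x)\to 0$ as $x\to\infty$. Define its Fourier–Stieltjes transform $$\Phi(t)=\int_0^\infty e^{ixt}\,d\varphi(x),\qquad t\in\mathbb{R}.$$ Then $\Phi(t)\to 0$ as $|t|\to\infty$ (i.e. $\varphi$ supports a Rajchman measure) if and only if $\Phi(t)$ has a finite limit as $|t|\to\infty$.
   Context: A function $\varphi$ of bounded variation is said to support a Rajchman measure if the Fourier–Stieltjes transform of the measure $d\varphi$ tends to zero at infinity. *)

(* Defs.v *)
From HB Require Import structures.
From mathcomp Require Import all_boot all_order all_algebra.
From mathcomp Require Import all_classical all_reals all_analysis.
Set Implicit Arguments. Unset Strict Implicit. Unset Printing Implicit Defensive.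
Import Order.TTheory GRing.Theory Num.Theory.
Import numFieldNormedType.Exports.
Local Open Scope classical_set_scope.
Local Open Scope ring_scope.

Section defs.
Context {R : realType}.

Definition bounded_variation_halfline (phi : R -> R) : Prop :=
  exists M : R, forall b : R, 0 <= b -> (total_variation 0 b phi <= M%:E)%E.

(* Jordan decomposition of phi on [0,+oo) (extended as constant on (-oo,0]):
   phi = jordan_pos phi - jordan_neg phi on [0,+oo); both parts are
   nondecreasing (and continuous when phi is continuous and BV). *)
Definition jordan_pos (phi : R -> R) (x : R) : R :=
  fine (pos_tv 0 phi (Num.max x 0)).
Definition jordan_neg (phi : R -> R) (x : R) : R :=
  fine (neg_tv 0 phi (Num.max x 0)).

(* Turn a function into a cumulative function (nondecreasing and
   right-continuous) when it is one; the default (identity) is never used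
   under the hypotheses of the theorem. *)
Definition to_cumulative (f : R -> R) : cumulative R R :=
  match pselect (nondecreasing f /\ right_continuous f) with
  | left H => HB.pack f (isCumulative.Build R _ R f (proj1 H) (proj2 H))
  | right _ => [the cumulative R R of @idfun R]
  end.

Definition dpos (phi : R -> R) := lebesgue_stieltjes_measure (to_cumulative (jordan_pos phi)).
Definition dneg (phi : R -> R) := lebesgue_stieltjes_measure (to_cumulative (jordan_neg phi)).

(* Integral over [0,+oo) w.r.t. the (signed) Stieltjes measure dphi.  Since phi
   is continuous, dphi has no atom at 0, so integrating over (0,+oo) is the
   same as integrating over [0,+oo). *)
Definition stieltjes_integral (phi : R -> R) (g : R -> R) : R :=
  Rintegral (dpos phi) `]0, +oo[ g - Rintegral (dneg phi) `]0, +oo[ g.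

(* Fourier-Stieltjes transform Phi(t) = int_0^oo e^{ixt} dphi(x), returned as
   the pair (Re Phi(t), Im Phi(t)) = (int cos(xt) dphi, int sin(xt) dphi). *)
Definition fourier_stieltjes (phi : R -> R) (t : R) : R * R :=
  (stieltjes_integral phi (fun x => cos (x * t)),
   stieltjes_integral phi (fun x => sin (x * t))).

End defs.

(* Main.v *)
Require Import Defs.
From HB Require Import structures.
From mathcomp Require Import all_boot all_order all_algebra.
From mathcomp Require Import all_classical all_reals all_analysis.
From mathcomp Require Import ring lra.
From mathcomp Require Import measurable_realfun.
Set Implicit Arguments. Unset Strict Implicit. Unset Printing Implicit Defensive.
Import Order.TTheory GRing.Theory Num.Theory.
Import numFieldNormedType.Exports.
Local Open Scope classical_set_scope.
Local Open Scope ring_scope.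
Local Notation JN := Defs.jordan_neg.
Section partA.
Context {R : realType}.
Variable g : R -> R.
Variable M : R.
Hypothesis gc : {within `[0, +oo[, continuous g}.
Hypothesis gbv : forall b : R, 0 <= b -> (total_variation 0 b g <= M%:E)%E.

Lemma A_BV b : 0 <= b -> bounded_variation 0 b g.
Proof.
move=> b0; apply/bounded_variationP => //.
rewrite ge0_fin_numE; last exact: total_variation_ge0.
exact: (le_lt_trans (gbv b0) (ltry _)).
Qed.

Lemma A_TVfin b : 0 <= b -> total_variation 0 b g \is a fin_num.
Proof. by move=> b0; apply/bounded_variationP => //; exact: A_BV. Qed.

Lemma A_F x : 0 <= x ->
  JN g x = (fine (total_variation 0 x g) - g x) / 2.
Proof.
move=> x0; rewrite /JN /Defs.jordan_neg max_l // /neg_tv.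
rewrite -(fineK (A_TVfin x0)) -EFinB -EFinM /=; done.
Qed.

Lemma A_nd : nondecreasing (JN g).
Proof.
move=> x y xy; rewrite /JN /Defs.jordan_neg.
have y0 : 0 <= Num.max y 0 by rewrite le_max lexx orbT.
have mxy : Num.max x 0 <= Num.max y 0.
  by rewrite ge_max !le_max xy lexx !orbT.
apply: (@fine_neg_tv_nondecreasing _ 0 (Num.max y 0)) => //.
- exact: A_BV.
- by rewrite in_itv/= le_max lexx orbT /= mxy.
- by rewrite in_itv/= y0 lexx.
Qed.


End partA.

Section partA2.
Context {R : realType}.
Variable g : R -> R.
Variable M : R.
Hypothesis gc : {within `[0, +oo[, continuous g}.
Hypothesis gbv : forall b : R, 0 <= b -> (total_variation 0 b g <= M%:E)%E.

Let gcont x : 0 < x -> {for x, continuous g}.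
Proof.
move=> x0; have [+ _] := (continuous_within_itvcyP 0 g).1 gc.
by apply; rewrite in_itv/= x0.
Qed.

Let gr x : 0 <= x -> g @ x^'+ --> g x.
Proof.
rewrite le_eqVlt => /predU1P[<-|x0].
  by have [_ ] := (continuous_within_itvcyP 0 g).1 gc.
exact: cvg_at_right_filter (gcont x0).
Qed.

Lemma A_rc : right_continuous (JN g).
Proof.
move=> x; have [x0|x0] := ltP x 0.
  have H : {near x^'+, cst (JN g x) =1 JN g}.
    near=> y; rewrite /JN /Defs.jordan_neg /= max_r ?(ltW x0)// max_r//.
    by apply: ltW; near: y; exact: nbhs_right_lt.
  exact: cvg_trans (near_eq_cvg H) (cvg_cst _).
have H : {near x^'+, fine \o neg_tv 0 g =1 JN g}.
  near=> y; rewrite /JN /Defs.jordan_neg /= max_l//.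
  by apply: (le_trans x0); apply: ltW; near: y; exact: nbhs_right_gt.
have -> : JN g x = fine (neg_tv 0 g x) by rewrite /JN /Defs.jordan_neg max_l.
apply: cvg_trans (near_eq_cvg H) _.
apply: (@neg_tv_right_continuous _ 0 x (x + 1)) => //.
- by rewrite ltrDl.
- by apply: (A_BV gbv); apply: addr_ge0.
- exact: gr.
Unshelve. all: by end_near. Qed.

Lemma A_lc a : 0 < a -> JN g @ a^'- --> JN g a.
Proof.
move=> a0.
have H : {near a^'-, (fun y => (fine (total_variation 0 y g) - g y) / 2) =1 JN g}.
  near=> y; rewrite (A_F gbv)//; apply: ltW; near: y; exact: nbhs_left_gt.
rewrite (A_F gbv) ?(ltW a0)//.
apply: cvg_trans (near_eq_cvg H) _.
apply: cvgM; last exact: cvg_cst.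
apply: cvgB.
  apply: (@total_variation_left_continuous _ 0 a a) => //.
  - exact: cvg_at_left_filter (gcont a0).
  - by apply: (A_BV gbv); apply: ltW.
exact: cvg_at_left_filter (gcont a0).
Unshelve. all: by end_near. Qed.

Lemma A_bound x : 0 <= x -> JN g x - JN g 0 <= M.
Proof.
move=> x0; rewrite (A_F gbv x0) (A_F gbv (lexx 0)) total_variationxx /=.
have tvx := A_TVfin gbv x0.
have le1 : `|g x - g 0| <= fine (total_variation 0 x g).
  by rewrite -lee_fin fineK// total_variation_ge.
have le2 : fine (total_variation 0 x g) <= M.
  by rewrite -lee_fin fineK// gbv.
have := ler_norm (g 0 - g x); rewrite distrC => le3.
lra.
Qed.

End partA2.

Section partB.
Context {R : realType}.
Variable g : R -> R.
Variable M : R.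
Hypothesis gc : {within `[0, +oo[, continuous g}.
Hypothesis gbv : forall b : R, 0 <= b -> (total_variation 0 b g <= M%:E)%E.

Lemma B_itv a b : a <= b -> dneg g `]a, b] = (JN g b - JN g a)%:E.
Proof.
move=> ab; rewrite /dneg /to_cumulative; case: pselect => [H|H]; last first.
  by exfalso; apply: H; split; [exact: A_nd gbv| exact: A_rc gc gbv].
rewrite /lebesgue_stieltjes_measure /measure_extension measurable_mu_extE /=; last exact: is_ocitv.
by rewrite wlength_itv_bnd.
Qed.

Lemma B_fin : (dneg g `]0%R, +oo[ < +oo)%E.
Proof.
apply: (@le_lt_trans _ _ M%:E); last exact: ltry.
pose F n : set R := `]0, n%:R]%classic.
have FE : `]0, +oo[%classic = \bigcup_n F n.
  apply/seteqP; split => x /=.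
    rewrite in_itv/= andbT => x0; exists (Num.truncn x).+1 => //.
    by rewrite /F /= in_itv/= x0 /= ltW// truncnS_gt.
  by move=> [n _]; rewrite /F /= !in_itv/= andbT => /andP[].
have mF n : measurable (F n) by exact: measurable_itv.
have := @nondecreasing_cvg_mu _ _ _ (dneg g) F mF.
rewrite -FE => /(_ (measurable_itv _)).
have ndF : nondecreasing_seq F.
  move=> m n mn; apply/subsetPset => x; rewrite /F /= !in_itv/= => /andP[-> xm].
  by rewrite (le_trans xm)// ler_nat.
move=> /(_ ndF) cv.
rewrite [X in (X <= _)%E](_ : _ = lim (dneg g \o F @ \oo)); last by apply/esym/cvg_lim.
apply: lime_le.
  by apply/cvg_ex; eexists; exact: cv.
apply: nearW => n /=; rewrite /F B_itv// lee_fin.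
exact: A_bound gbv _ _.
Qed.

Lemma B_atom a : 0 < a -> dneg g [set a] = 0%E.
Proof.
move=> a0; apply/eqP; rewrite eq_le measure_ge0 andbT.
apply/lee_addgt0Pr => e e0; rewrite add0e.
have := A_lc gc gbv a0 => /cvgrPdist_lt /(_ e e0).
rewrite near_withinE => /nbhs_ballP[d /= d0 Hd].
have hd : a - d / 2 < a by rewrite ltrBlDr ltrDl divr_gt0.
have Hy := Hd (a - d / 2).
have : ball a d (a - d / 2).
  rewrite /ball /= opprB addrC subrK ger0_norm ?divr_ge0 ?ltW//.
  by rewrite ltr_pdivrMr// ltr_pMr// ltr1n.
move=> /Hy /(_ hd) {}Hy.
apply: (@le_trans _ _ (dneg g `]a - d / 2, a])).
  apply: le_measure; rewrite ?inE//.
  by move=> x /= ->; rewrite in_itv/= hd lexx.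
rewrite B_itv ?(ltW hd)// lee_fin.
by apply: le_trans (ltW Hy); exact: ler_norm.
Qed.

End partB.

Section kernel.
Context {R : realType}.

Lemma K_cos (x : R) n : 2 * sin (x / 2) * \sum_(k < n) cos (x * k.+1%:R) =
  sin (x * n%:R + x / 2) - sin (x / 2).
Proof.
elim: n => [|n IH]; first by rewrite big_ord0 !mulr0 add0r subrr.
rewrite big_ord_recr /= mulrDr IH.
have e2 : x * n%:R + x / 2 = (x * n.+1%:R) - x / 2.
  by rewrite -natr1; field.
rewrite e2 sinB sinD; ring.
Qed.

Lemma K_sin (x : R) n : 2 * sin (x / 2) * \sum_(k < n) sin (x * k.+1%:R) =
  cos (x / 2) - cos (x * n%:R + x / 2).
Proof.
elim: n => [|n IH]; first by rewrite big_ord0 !mulr0 add0r subrr.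
rewrite big_ord_recr /= mulrDr IH.
have e2 : x * n%:R + x / 2 = (x * n.+1%:R) - x / 2.
  by rewrite -natr1; field.
rewrite e2 cosB cosD; ring.
Qed.

Lemma K_bound (c : R -> R) (x : R) n :
  (forall n, `|2 * sin (x / 2) * \sum_(k < n) c (x * k.+1%:R)| <= 2) ->
  sin (x / 2) != 0 ->
  `|\sum_(k < n) c (x * k.+1%:R)| <= `|sin (x / 2)|^-1.
Proof.
move=> H s0; have := H n; rewrite !normrM ger0_norm// => h.
have sp : 0 < `|sin (x / 2)| by rewrite normr_gt0.
have tp : 0 < `|sin (x / 2)|^-1 by rewrite invr_gt0.
have st : `|sin (x / 2)| * `|sin (x / 2)|^-1 = 1 by rewrite mulfV// gt_eqF.
move: h sp tp st; set a := `|sin _|; set b := `|\sum_(_ < _) _|; set t := a^-1.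
move=> h sp tp st.
have ab : a * b <= 1.
  by rewrite -(@ler_pM2l _ 2)// mulr1 mulrA.
by rewrite -[b]mul1r -st (mulrC a) -mulrA ger_pMr.
Qed.



End kernel.

Section zeros.
Context {R : realType}.

Lemma K_cos_b (x : R) n : `|2 * sin (x / 2) * \sum_(k < n) cos (x * k.+1%:R)| <= 2.
Proof.
rewrite K_cos; apply: (le_trans (ler_normB _ _)).
have := sin_max (x * n%:R + x / 2); have := sin_max (x / 2); lra.
Qed.

Lemma K_sin_b (x : R) n : `|2 * sin (x / 2) * \sum_(k < n) sin (x * k.+1%:R)| <= 2.
Proof.
rewrite K_sin; apply: (le_trans (ler_normB _ _)).
have := cos_max (x * n%:R + x / 2); have := cos_max (x / 2); lra.
Qed.

Lemma Z_sin (y : R) : 0 < y -> sin y = 0 -> exists m : nat, y = pi *+ m.+1.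
Proof.
move=> y0 sy; have hp := @pi_gt0 R.
set n := Num.truncn (y / pi).
have /andP[h1 h2] : n%:R <= y / pi < n.+1%:R.
  by apply: truncn_itv; rewrite divr_ge0// ltW.
have e : y = (y - pi *+ n) + pi *+ n by rewrite subrK.
have r0 : 0 <= y - pi *+ n.
  by rewrite subr_ge0 -mulr_natl -ler_pdivlMr.
have rpi : y - pi *+ n < pi.
  rewrite ltrBlDr -mulrS -mulr_natl -ltr_pdivrMr//.
move: sy; rewrite e (alternatingn (@sinDpi R)) => /eqP; rewrite mulf_eq0 => /orP[|].
  by rewrite -signr_odd; case: (odd n); rewrite ?oppr_eq0 oner_eq0.
move: r0; rewrite le_eqVlt => /predU1P[r00|r0].
  move=> _; move/eqP: r00; rewrite eq_sym subr_eq0 => /eqP yn.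
  move: yn; clearbody n; case: n {h1 h2 rpi e} => [|m] yn.
    by move: y0; rewrite yn mulr0n ltxx.
  by exists m; rewrite subrK.
by rewrite gt_eqF// sin_gt0_pi// r0 rpi.
Qed.

End zeros.

Section partC.
Context {R : realType}.
Variable mu : {measure set (measurableTypeR R) -> \bar R}.
Local Notation D := (`]0%R, +oo[%classic : set (measurableTypeR R)).
Hypothesis mufin : (mu D < +oo)%E.
Hypothesis muatom : forall a : R, 0 < a -> mu [set a] = 0%E.

Let mD : measurable D. Proof. exact: measurable_itv. Qed.

Lemma C_int (f : R -> R) (B : R) : continuous f -> (forall x, `|f x| <= B) ->
  mu.-integrable D (EFin \o f).
Proof.
move=> cf fB; apply: measurable_bounded_integrable => //.
  exact: measurable_funTS (measurable_realfun.continuous_measurable_fun cf).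
exists B; split; first exact: num_real.
by move=> M BM x _ /=; rewrite (le_trans (fB x))// ltW.
Qed.


Variable c : R -> R.
Hypothesis cc : continuous c.
Hypothesis c1 : forall y, `|c y| <= 1.
Hypothesis cK : forall x n, `|2 * sin (x / 2) * \sum_(k < n) c (x * k.+1%:R)| <= 2.

Let fk (k : nat) (x : R) := c (x * k.+1%:R).

Let fk_cont k : continuous (fk k).
Proof.
move=> x; apply: continuous_comp; last exact: cc.
exact: mulrr_continuous.
Qed.

Let fk_int k : mu.-integrable D (EFin \o fk k).
Proof. by apply: (@C_int (fk k) 1 (@fk_cont k)) => y; exact: c1. Qed.

Let f_ (n : nat) (x : R) : \bar R :=
  ((n.+1%:R^-1)%:E * \sum_(k < n.+1) (fk k x)%:E)%E.

Let f_int n : mu.-integrable D (f_ n).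
Proof.
apply: integrableZl => //.
by apply: (integrable_sum mD _ (h := fun (k : 'I_n.+1) x => (fk k x)%:E)) => k _; exact: fk_int.
Qed.

Let f_E n x : f_ n x = (n.+1%:R^-1 * \sum_(k < n.+1) fk k x)%:E.
Proof. by rewrite /f_ sumEFin EFinM. Qed.

Lemma C_main : (fun n => n.+1%:R^-1 * \sum_(k < n.+1) Rintegral mu D (fk k)) @ \oo --> 0.
Proof.
have eqA n : (n.+1%:R^-1 * \sum_(k < n.+1) Rintegral mu D (fk k))%:E =
    (\int[mu]_(x in D) f_ n x)%E.
  rewrite /f_ integralZl//; last first.
    by apply: (integrable_sum mD _ (h := fun (k : 'I_n.+1) x => (fk k x)%:E)) => k _; exact: fk_int.
  rewrite (integral_sum mD (f := fun (k : 'I_n.+1) x => (fk k x)%:E)); last by move=> k; exact: fk_int.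
  rewrite EFinM -sumEFin; congr (_ * _)%E.
  by apply: eq_bigr => k _; rewrite /Rintegral fineK//; exact: (integrable_fin_num mD (@fk_int k)).
have S_le n x : `|\sum_(k < n.+1) fk k x| <= n.+1%:R.
  apply: (le_trans (ler_norm_sum _ _ _)).
  have -> : n.+1%:R = \sum_(k < n.+1) (1:R) by rewrite sumr_const card_ord.
  by apply: ler_sum => k _; exact: c1.
have ig : mu.-integrable D (EFin \o cst 1%R).
  by apply: (@C_int (cst 1%R) 1) => [|y]; [exact: cst_continuous|rewrite normr1].
have f_g : {ae mu, forall x n, D x -> (`|f_ n x| <= (EFin \o cst 1%R) x)%E}.
  apply: aeW => x n Dx; rewrite f_E /= lee_fin normrM ger0_norm ?invr_ge0//.
  apply: (le_trans (ler_wpM2l _ (S_le n x))); first by rewrite invr_ge0.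
  by rewrite mulVf ?pnatr_eq0.
have f_f : {ae mu, forall x, D x -> f_ ^~ x @ \oo --> (cst 0%E) x}.
  pose N := \bigcup_m [set (pi *+ m.+1) *+ 2 : R].
  have negN : mu.-negligible N.
    apply: negligible_bigcup => m; exists [set (pi *+ m.+1) *+ 2 : R]; split => //.
    by apply: muatom; rewrite pmulrn_lgt0// pmulrn_lgt0// pi_gt0.
  apply: (negligibleS _ negN) => x /= Hx.
  have Dx : D x by apply: contrapT => nD; apply: Hx => /nD.
  have x0 : 0 < x by move: Dx; rewrite /= in_itv/= andbT.
  have [s0|s0] := eqVneq (sin (x / 2)) 0.
    have [m em] := Z_sin (divr_gt0 x0 (ltr0n _ 2)) s0.
    by exists m => //=; rewrite -em mulr2n -splitr.
  exfalso; apply: Hx => _.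
  apply: cvg_EFin; first by apply: nearW => n; rewrite f_E.
  have hB n : `|\sum_(k < n) fk k x| <= `|sin (x / 2)|^-1.
    exact: (@K_bound _ c x n (cK x) s0).
  have Bp : 0 < `|sin (x / 2)|^-1 by rewrite invr_gt0 normr_gt0.
  apply/cvgr0Pnorm_le => e e0.
  move: (@cvg_harmonic R) => /cvgr0Pnorm_le /(_ _ (divr_gt0 e0 Bp)).
  apply: filterS => n hn /=; rewrite f_E /= normrM.
  apply: (le_trans (ler_pM _ _ hn (hB n.+1))) => //.
  by rewrite divfK// gt_eqF.
have [_ _ dc] := dominated_convergence mD (fun n => measurable_int mu (@f_int n)) (measurable_cst (0%E : \bar R)) f_f ig f_g.
move: dc; rewrite integral0 => dc.
have : (fun n => (n.+1%:R^-1 * \sum_(k < n.+1) Rintegral mu D (fk k))%:E) @ \oo --> 0%E.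
  by under eq_fun do rewrite eqA.
by move/fine_cvg.
Qed.

End partC.

Lemma D_key (R : realType) (phi : R -> R) (M : R)
  (phi_cont : {within `[0, +oo[, continuous phi})
  (hM : forall b : R, 0 <= b -> (total_variation 0 b phi <= M%:E)%E)
  (c : R -> R) (cc : continuous c) (c1 : forall y, `|c y| <= 1)
  (cK : forall x n, `|2 * sin (x / 2) * \sum_(k < n) c (x * k.+1%:R)| <= 2) :
  (fun n => n.+1%:R^-1 * \sum_(k < n.+1)
     stieltjes_integral phi (fun x => c (x * k.+1%:R))) @ \oo --> 0.
Proof.
have gbvN : forall b : R, 0 <= b -> (total_variation 0 b (\- phi)%R <= M%:E)%E.
  by move=> b b0; rewrite total_variationN hM.
have gcN : {within `[0, +oo[, continuous (\- phi)}.
  move=> x; apply: continuous_comp; first exact: phi_cont.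
  exact: opp_continuous.
have eP : dpos phi = dneg (\- phi) by [].
have -> : (fun n => n.+1%:R^-1 * \sum_(k < n.+1)
     stieltjes_integral phi (fun x => c (x * k.+1%:R))) =
  (fun n => n.+1%:R^-1 * \sum_(k < n.+1) Rintegral (dneg (\- phi)) `]0, +oo[ (fun x => c (x * k.+1%:R))
     - n.+1%:R^-1 * \sum_(k < n.+1) Rintegral (dneg phi) `]0, +oo[ (fun x => c (x * k.+1%:R))).
  by apply/funext => n; rewrite -mulrBr -sumrB.
have H1 := (C_main (B_fin gcN gbvN) (B_atom gcN gbvN) cc c1 cK).
have H2 := (C_main (B_fin phi_cont hM) (B_atom phi_cont hM) cc c1 cK).
have H := @cvgB _ _ _ _ _ _ _ _ _ H1 H2.
rewrite subr0 in H; exact: H.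
Qed.

Unset Implicit Arguments.

Theorem theorem1 (R : realType) (phi : R -> R)
  (phi_cont : {within `[0, +oo[, continuous phi})
  (phi_int : (@lebesgue_measure R).-integrable `]0, +oo[ (EFin \o phi))
  (phi_bv : bounded_variation_halfline phi)
  (phi_lim : phi x @[x --> +oo] --> 0) :
  ((fourier_stieltjes phi t @[t --> +oo] --> (0 : R * R)) /\
   (fourier_stieltjes phi t @[t --> -oo] --> (0 : R * R)))
  <->
  (exists L : R * R,
     (fourier_stieltjes phi t @[t --> +oo] --> L) /\
     (fourier_stieltjes phi t @[t --> -oo] --> L)).
Proof.
split => [[h1 h2]|[L [hL hL']]]; first by exists 0.
have [M hM] := phi_bv.
have cv (c : R -> R) (cc : continuous c) (c1 : forall y, `|c y| <= 1)
  (cK : forall x n, `|2 * sin (x / 2) * \sum_(k < n) c (x * k.+1%:R)| <= 2) (l : R) :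
  (fun k : nat => stieltjes_integral phi (fun x => c (x * k.+1%:R))) @ \oo --> l -> l = 0.
  move=> hl; have hA := cesaro hl.
  have h0 := D_key phi_cont hM cc c1 cK.
  have E : arithmetic_mean (fun k : nat => stieltjes_integral phi (fun x => c (x * k.+1%:R))) =
     (fun n => n.+1%:R^-1 * \sum_(k < n.+1) stieltjes_integral phi (fun x => c (x * k.+1%:R))).
    by apply/funext => n; rewrite /arithmetic_mean /series /= big_mkord.
  rewrite E in hA.
  exact: (cvg_unique _ hA h0).
have hs : (fun k : nat => (k.+1%:R : R)) @ \oo --> +oo.
  have := @cvgr_idn R; rewrite -cvg_shiftS; exact.
have hL1 := cvg_comp _ _ hs hL.
have e1 : L.1 = 0.
  apply: (cv _ (@continuous_cos R) (@cos_max R) (@K_cos_b R)).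
  exact: (cvg_comp _ _ hL1 cvg_fst).
have e2 : L.2 = 0.
  apply: (cv _ (@continuous_sin R) (@sin_max R) (@K_sin_b R)).
  exact: (cvg_comp _ _ hL1 cvg_snd).
have eL : L = 0 by case: L {hL hL' hL1} e1 e2 => a b /= -> ->.
by rewrite -eL.
Qed.
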